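(* Let $\Gamma=(V,E)$ be a finite connected planar quiver, $k$ a field of characteristic $0$, and $I\subseteq R^2$ a two-sided ideal of $k\Gamma$. Then (a) $\dim_k\mathfrak{D}_V=|V|-1$; (b) $\dim_k\mathfrak{D}_{\mathbb{P}}=|F|-1$; (c) $\mathfrak{D}_V$ and $\mathfrak{D}_{\mathbb{P}}$ are subspaces of $\mathfrak{D}_E$ with $\mathfrak{D}_V\cap\mathfrak{D}_{\mathbb{P}}=0$.
   Context: For a path $p$, $t(p),h(p)$ are its start and end vertex; paths multiply by left-to-right concatenation (product $0$ if they do not concatenate). $R$ is the ideal generated by $E$, $\overline{x}=x+I$. A differential operator from $k\Gamma$ to $k\Gamma/I$ is a $k$-linear map with $D(xy)=D(x)\overline{y}+\overline{x}D(y)$. For $p\in E$, $D_{p,\overline{p}}$ is the unique differential operator $k\Gamma\to k\Gamma/I$ with $D_{p,\overline{p}}(p)=\overline{p}$ and vanishing on all other arrows and all vertices; $\mathfrak{D}_E$ is the span of $\{D_{p,\overline{p}}\mid p\in E\}$. For $v\in V$, $D_{\overline{v}}$ is $x\mapsto\overline{v}\,\overline{x}-\overline{x}\,\overline{v}$, and $\mathfrak{D}_V$ is the span of $\{D_{\overline{v}}\mid v\in V\}$. A planar quiver is a quiver with a fixed embedding into $\mathbb{R}^2$; its set $F$ of faces is the set of connected components of $\mathbb{R}^2\setminus\Gamma$. For a face $f$ whose boundary (primitive cycle) consists of the ordered list of arrows $p_1,\dots,p_s$ (an arrow bordering $f$ on both sides appears twice), the face differential operator is $D_{\mathbbm{p}_f}=\sum_{i=1}^s\epsilon_iD_{p_i,\overline{p_i}}$,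 where $\epsilon_i=+1$ if $p_i$ runs clockwise when viewed from the interior of $f$ and $\epsilon_i=-1$ otherwise. $\mathfrak{D}_{\mathbb{P}}$ is the span of $\{D_{\mathbbm{p}_f}\mid f\in F\}$. *)

(* Defs.v *)
From HB Require Import structures.
From mathcomp Require Import all_boot all_order all_algebra all_fingroup.
Set Implicit Arguments. Unset Strict Implicit. Unset Printing Implicit Defensive.
Import Order.TTheory GRing.Theory.
Local Open Scope ring_scope.

Section Quiver.
Variables (V E : finType) (t h : E -> V).

(* A path: either the trivial path at a vertex (inl v) or a non-empty
   sequence of arrows [e1; ...; en] with h e_i = t e_(i+1). *)
Definition qpath := (V + seq E)%type.

Definition valid_path (p : qpath) : bool :=
  match p with
  | inl _ => true
  | inr [::] => false
  | inr (e :: s) => path (fun a b => h a == t b) e s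
  end.

Definition triv_path (v : V) : qpath := inl v.
Definition arrow_path (e : E) : qpath := inr [:: e].

(* left-to-right concatenation; None means the product is 0 *)
Definition pcat (p q : qpath) : option qpath :=
  match p, q with
  | inl v, inl w => if v == w then Some p else None
  | inl v, inr (e :: _) => if v == t e then Some q else None
  | inr (e :: s), inl w => if h (last e s) == w then Some p else None
  | inr (e :: s), inr (e' :: s') =>
      if h (last e s) == t e' then Some (inr ((e :: s) ++ (e' :: s'))) else None
  | _, _ => None
  end.

Definition qadj : rel V :=
  fun u v => [exists e, ((t e == u) && (h e == v)) || ((t e == v) && (h e == u))].
Definition qconnected : Prop := (0 < #|V|)%N /\ forall u v, connect qadj u v.

(* darts: (e, true) = end of e at its tail, (e, false) = end at its head *)
Definition dart := (E * bool)%type.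
Definition dvert (d : dart) : V := if d.2 then t d.1 else h d.1.
Definition dflip (d : dart) : dart := (d.1, ~~ d.2).

(* sigma: the cyclic (say counter-clockwise) order of darts around each
   vertex.  face permutation: traverse the dart, then rotate. *)
Definition face_perm (sigma : {perm dart}) (d : dart) : dart := sigma (dflip d).

(* faces = orbits of face_perm, represented by their roots; when there
   are no arrows the plane minus the graph has exactly one face *)
Definition face_roots (sigma : {perm dart}) : seq dart :=
  enum (froots (face_perm sigma)).
Definition nfaces (sigma : {perm dart}) : nat :=
  if #|E| == 0%N then 1%N else size (face_roots sigma).

Definition planar_rotation (sigma : {perm dart}) : Prop :=
  [/\ forall d, dvert (sigma d) = dvert d,
      forall d d', dvert d = dvert d' -> fconnect sigma d d'
    & (#|V| + nfaces sigma = #|E| + 2)%N ].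

(* orientation sign of a dart along its face boundary traversal *)
Definition dsign (k : pzRingType) (d : dart) : k := if d.2 then 1 else -1.

Variable k : fieldType.

(* A is (a copy of) the path algebra k Gamma, with basis iota (paths) *)
Definition is_path_algebra (A : algType k) (iota : qpath -> A) : Prop :=
  [/\ (forall s : seq (qpath * k), uniq (map fst s) -> all valid_path (map fst s) ->
         \sum_(u <- s) u.2 *: iota u.1 = 0 -> all (fun u => u.2 == 0) s),
      (forall x : A, exists2 s : seq (qpath * k), all valid_path (map fst s) &
         x = \sum_(u <- s) u.2 *: iota u.1)
    & (forall p q, valid_path p -> valid_path q ->
         iota p * iota q = if pcat p q is Some r then iota r else 0) ].

Section Alg.
Variables (A : algType k) (iota : qpath -> A).

(* R = two-sided ideal generated by the arrows; R^2 = its square *)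
Definition inR (x : A) : Prop :=
  exists s : seq (A * E * A), x = \sum_(u <- s) u.1.1 * iota (arrow_path u.1.2) * u.2.
Definition inR2 (x : A) : Prop :=
  exists s : seq (A * A), (forall u, u \in s -> inR u.1 /\ inR u.2) /\
    x = \sum_(u <- s) u.1 * u.2.

Variables (B : algType k) (pi : A -> B).

(* pi : A -> B is (a copy of) the quotient map A -> A/I with I = ker pi *)
Definition is_quotient_map : Prop :=
  [/\ forall (a : k) x y, pi (a *: x + y) = a *: pi x + pi y,
      forall x y, pi (x * y) = pi x * pi y,
      pi 1 = 1
    & forall b, exists x, pi x = b].

Definition differential_operator (D : A -> B) : Prop :=
  (forall (a : k) x y, D (a *: x + y) = a *: D x + D y) /\
  (forall x y, D (x * y) = D x * pi y + pi x * D y).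

Definition is_Dp (D : E -> A -> B) : Prop :=
  forall p, differential_operator (D p) /\
    D p (iota (arrow_path p)) = pi (iota (arrow_path p)) /\
    (forall q, q != p -> D p (iota (arrow_path q)) = 0) /\
    (forall v, D p (iota (triv_path v)) = 0).

Definition Dvert (v : V) (x : A) : B :=
  pi (iota (triv_path v)) * pi x - pi x * pi (iota (triv_path v)).

Definition Dface (D : E -> A -> B) (sigma : {perm dart}) (r : dart) (x : A) : B :=
  \sum_(d <- fingraph.orbit (face_perm sigma) r) dsign k d *: D d.1 x.

Definition DV_family : seq (A -> B) := [seq Dvert v | v <- enum V].
Definition DE_family (D : E -> A -> B) : seq (A -> B) := [seq D p | p <- enum E].
Definition DP_family (D : E -> A -> B) (sigma : {perm dart}) : seq (A -> B) :=
  if #|E| == 0%N then [:: fun _ => 0] else [seq Dface D sigma r | r <- face_roots sigma].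

End Alg.
End Quiver.

Section Span.
Variables (k : fieldType) (X : Type) (M : lmodType k).

Definition fam_nth (fs : seq (X -> M)) (i : nat) : X -> M := nth (fun _ => 0) fs i.

Definition lin_indep (fs : seq (X -> M)) : Prop :=
  forall c : nat -> k,
    (forall x, \sum_(i < size fs) c i *: fam_nth fs i x = 0) ->
    forall i, (i < size fs)%N -> c i = 0.

Definition in_span (fs : seq (X -> M)) (g : X -> M) : Prop :=
  exists c : nat -> k, forall x, g x = \sum_(i < size fs) c i *: fam_nth fs i x.

(* dim_k span(fs) = d : d is the maximal size of a linearly independent
   subfamily of fs *)
Definition span_dim (fs : seq (X -> M)) (d : nat) : Prop :=
  (exists m : bitseq, lin_indep (mask m fs) /\ size (mask m fs) = d) /\
  (forall m : bitseq, lin_indep (mask m fs) -> (size (mask m fs) <= d)%N).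

Definition span_sub (fs gs : seq (X -> M)) : Prop :=
  forall i, (i < size fs)%N -> in_span gs (fam_nth fs i).

Definition span_meet_trivial (fs gs : seq (X -> M)) : Prop :=
  forall g, in_span fs g -> in_span gs g -> forall x, g x = 0.
End Span.

(* Main.v *)
Require Import Defs.
From HB Require Import structures.
From mathcomp Require Import all_boot all_order all_algebra all_fingroup.
Set Implicit Arguments. Unset Strict Implicit. Unset Printing Implicit Defensive.
Import Order.TTheory GRing.Theory Num.Theory.
Local Open Scope ring_scope.

Lemma mx0E (K : nmodType) m n i j : (0 : 'M[K]_(m,n)) i j = 0.
Proof. by rewrite /GRing.zero /= mxE. Qed.

Section Harm.
Variables (n : nat) (w : 'I_n -> 'I_n -> nat).
Hypothesis wsym : forall i j, w i j = w j i.
Hypothesis wconn : forall P : pred 'I_n, (exists i, P i) ->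
  (forall i j, (0 < w i j)%N -> P i -> P j) -> forall i, P i.

Definition harm (K : pzRingType) (u : 'I_n -> K) j := \sum_i (w i j)%:R * (u j - u i).

Lemma maxprinciple (u : 'I_n -> rat) : (forall j, harm u j = 0) -> forall i j, u i = u j.
Proof.
move=> H i0 j.
pose m := [arg max_(i > i0) u i]%O.
have [im _ Hm] : extremum_spec >=%O predT u m by apply: arg_maxP.
have all_m : forall l, u l == u im.
  apply: wconn; first by exists im.
  move=> i l wp /eqP ui.
  have := H i; rewrite /harm => /psumr_eq0P Hz.
  have Hz' : (w l i)%:R * (u i - u l) = 0.
    apply: Hz => // l' _; rewrite mulr_ge0 ?ler0n // ui subr_ge0; exact: Hm.
  move/eqP: Hz'; rewrite mulf_eq0 pnatr_eq0 -wsym eqn0Ngt wp /= subr_eq0 ui.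
  by move=> /eqP <-.
by rewrite (eqP (all_m i0)) (eqP (all_m j)).
Qed.

Variable i0 : 'I_n.

Definition MK (K : pzRingType) : 'M[K]_n :=
  \matrix_(i, j) ((i == j)%:R * (\sum_l w i l)%:R - (w i j)%:R + ((i == i0) && (j == i0))%:R).

Lemma MK_row (K : comPzRingType) (u : 'rV[K]_n) j :
  (u *m MK K) 0 j = harm (fun i => u 0 i) j + (j == i0)%:R * u 0 j.
Proof.
rewrite !mxE /harm.
under eq_bigr => i _ do rewrite mxE mulrDr mulrBr.
rewrite big_split /= sumrB.
have E1 : \sum_(i < n) u 0 i * ((i == j)%:R * (\sum_(l < n) w i l)%:R) =
          u 0 j * (\sum_(l < n) w j l)%:R.
  rewrite (bigD1 j) //= eqxx mul1r [X in _ + X]big1 ?addr0 //.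
  by move=> i /negbTE ->; rewrite mul0r mulr0.
have E2 : \sum_(i < n) u 0 i * ((i == i0) && (j == i0))%:R = (j == i0)%:R * u 0 j.
  rewrite (bigD1 j) //= andbb mulrC [X in _ + X]big1 ?addr0 //.
  move=> i ij; case: (boolP (i == i0)) => [/eqP ii0|]; last by rewrite mulr0.
  by rewrite ii0 eq_sym in ij; rewrite (negbTE ij) mulr0.
rewrite E1 E2; congr (_ + _).
under [RHS]eq_bigr => i _ do rewrite mulrBr.
rewrite sumrB -mulr_suml natr_sum mulrC; congr (_ * _ - _).
  by apply: eq_bigr => l _; rewrite wsym.
by apply: eq_bigr => i _; rewrite mulrC.
Qed.

Lemma MK_map (K : pzRingType) : map_mx intr (MK int) = MK K.
Proof.
apply/matrixP => i j; rewrite !mxE.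
by rewrite rmorphD rmorphB rmorphM !rmorph_nat.
Qed.

Lemma MK_rat_ker (u : 'rV[rat]_n) : u *m MK rat = 0 -> u = 0.
Proof.
move=> Hu.
have Hj j : harm (fun i => u 0 i) j + (j == i0)%:R * u 0 j = 0.
  by rewrite -MK_row Hu mx0E.
have Hs : \sum_j harm (fun i => u 0 i) j = 0.
  rewrite /harm.
  under eq_bigr => j _ do under eq_bigr => i _ do rewrite mulrBr.
  rewrite (eq_bigr (fun j => \sum_i (w i j)%:R * u 0 j - \sum_i (w i j)%:R * u 0 i)); last by move=> j _; rewrite sumrB.
  rewrite sumrB exchange_big /=.
  by apply/eqP; rewrite subr_eq0; apply/eqP; apply: eq_bigr => j _; apply: eq_bigr => i _; rewrite wsym.
have Hi0 : u 0 i0 = 0.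
  have := congr1 (fun F => F) (erefl (\sum_j (harm (fun i => u 0 i) j + (j == i0)%:R * u 0 j))).
  move=> _.
  have : \sum_j (harm (fun i => u 0 i) j + (j == i0)%:R * u 0 j) = 0 by rewrite big1.
  rewrite big_split /= Hs add0r (bigD1 i0) //= eqxx mul1r big1 ?addr0 //.
  by move=> j /negbTE ->; rewrite mul0r.
have Hh j : harm (fun i => u 0 i) j = 0.
  have := Hj j; case: eqP => [->|_]; first by rewrite Hi0 mulr0 addr0.
  by rewrite mul0r addr0.
have Hc := maxprinciple Hh.
apply/rowP => j; rewrite mxE (Hc j i0) Hi0 //.
Qed.

Lemma MK_rat_unit : MK rat \in unitmx.
Proof.
rewrite -row_free_unit -kermx_eq0; apply/eqP/row_matrixP => i.
rewrite row0; apply: MK_rat_ker.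
by rewrite -row_mul mulmx_ker row0.
Qed.

Lemma MK_int_det : \det (MK int) != 0.
Proof.
have := MK_rat_unit; rewrite unitmxE unitfE -MK_map det_map_mx.
by apply: contra => /eqP ->; rewrite rmorph0.
Qed.

Lemma intr_char0_eq0 (K : fieldType) (z : int) : [pchar K] =i pred0 -> (z%:~R == 0 :> K) = (z == 0).
Proof.
move=> /pcharf0P H; case: z => m.
  by have -> : (Posz m)%:~R = m%:R :> K by []; rewrite H.
rewrite NegzE rmorphN oppr_eq0 /=.
by rewrite -[X in X == 0]/(m.+1%:R) H.
Qed.

Lemma MK_ker (K : fieldType) (u : 'rV[K]_n) : [pchar K] =i pred0 -> u *m MK K = 0 -> u = 0.
Proof.
move=> ch Hu.
have Hunit : MK K \in unitmx.
  by rewrite unitmxE unitfE -MK_map det_map_mx intr_char0_eq0 // MK_int_det.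
by rewrite -(mulmxK Hunit u) Hu mul0mx.
Qed.
End Harm.

Lemma harmonic_const (n : nat) (w : 'I_n -> 'I_n -> nat) (K : fieldType) :
  [pchar K] =i pred0 -> (forall i j, w i j = w j i) ->
  (forall P : pred 'I_n, (exists i, P i) ->
     (forall i j, (0 < w i j)%N -> P i -> P j) -> forall i, P i) ->
  forall b : 'I_n -> K, (forall j, harm w b j = 0) -> forall i j, b i = b j.
Proof.
move=> ch wsym wconn b Hb i0 j.
pose u : 'rV[K]_n := \row_l (b l - b i0).
have : u *m MK w i0 K = 0.
  apply/rowP => l; rewrite (MK_row wsym) mx0E.
  have -> : harm w (fun i => u 0 i) l = harm w b l.
    by rewrite /harm; apply: eq_bigr => i _; rewrite /u !mxE opprB addrA subrK.
  rewrite Hb add0r /u mxE; case: eqP => [->|_]; by rewrite ?subrr ?mulr0 ?mul0r.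
move=> /(MK_ker wsym wconn ch) /rowP /(_ j); rewrite /u mxE mx0E => /eqP.
by rewrite subr_eq0 => /eqP.
Qed.

Section Paths.
Variables (V E : finType) (t h : E -> V) (k : fieldType) (A : algType k) (iota : qpath V E -> A).
Hypothesis Hpa : is_path_algebra t h iota.

Local Notation valid := (valid_path t h).
Local Notation ap e := (arrow_path V e).
Local Notation tp v := (triv_path E v).

Definition plen (p : qpath V E) : nat := match p with inl _ => 0%N | inr s => size s end.
Definition expand (s : seq (qpath V E * k)) : A := \sum_(u <- s) u.2 *: iota u.1.
Definition expge (n : nat) (x : A) := exists s, [/\ all valid (map fst s),
   all (fun u => n <= plen u.1)%N s & x = expand s].

Lemma pcat_valid p q r : valid p -> valid q -> pcat t h p q = Some r ->
  valid r /\ plen r = (plen p + plen q)%N.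
Proof.
case: p => [v|[|e s]] //; case: q => [w|[|e' s']] //=.
- by move=> _ _; case: eqP => // _ [<-].
- by move=> _ Hq; case: eqP => // _ [<-].
- by move=> Hp _; case: eqP => // _ [<-]; rewrite addn0.
move=> Hp Hq; case: eqP => // He [<-] /=; split; last by rewrite size_cat.
by rewrite cat_path Hp /= He eqxx.
Qed.

Lemma expge_any x : expge 0 x.
Proof.
case: Hpa => _ /(_ x) [s Hs ->] _; exists s; split => //.
by apply/allP.
Qed.

Lemma expge_le m n x : (m <= n)%N -> expge n x -> expge m x.
Proof.
move=> mn [s [H1 H2 ->]]; exists s; split => //.
by apply/allP => u /(allP H2); apply: leq_trans.
Qed.

Lemma expge0 n : expge n 0.
Proof. by exists [::]; split => //; rewrite /expand big_nil. Qed.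

Lemma expge_add n x y : expge n x -> expge n y -> expge n (x + y).
Proof.
move=> [s [H1 H2 ->]] [s' [H1' H2' ->]]; exists (s ++ s'); split.
- by rewrite map_cat all_cat H1 H1'.
- by rewrite all_cat H2 H2'.
by rewrite /expand big_cat.
Qed.

Lemma expge_scale n a x : expge n x -> expge n (a *: x).
Proof.
move=> [s [H1 H2 ->]]; exists [seq (u.1, a * u.2) | u <- s]; split.
- by rewrite -map_comp.
- by rewrite all_map.
rewrite /expand big_map scaler_sumr; apply: eq_bigr => u _ /=.
by rewrite scalerA.
Qed.

Lemma expge_sum n (I : eqType) (r : seq I) (F : I -> A) :
  (forall i, i \in r -> expge n (F i)) -> expge n (\sum_(i <- r) F i).
Proof.
elim: r => [|i r IH] H; first by rewrite big_nil; apply: expge0.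
rewrite big_cons; apply: expge_add; first by apply: H; rewrite inE eqxx.
by apply: IH => j jr; apply: H; rewrite inE jr orbT.
Qed.

Lemma expge_pcat n a p q : valid p -> valid q -> (n <= plen p + plen q)%N ->
  expge n (a *: (iota p * iota q)).
Proof.
move=> vp vq le; case: Hpa => _ _ /(_ p q vp vq) ->.
case E1: (pcat t h p q) => [r|]; last by rewrite scaler0; apply: expge0.
have [vr lr] := pcat_valid vp vq E1.
exists [:: (r, a)]; split => /=; rewrite ?vr ?lr ?le //.
by rewrite /expand big_seq1.
Qed.

Lemma expge_mul m n x y : expge m x -> expge n y -> expge (m + n) (x * y).
Proof.
move=> [s [H1 H2 ->]] [s' [H1' H2' ->]].
rewrite /expand mulr_sumr; apply: expge_sum => u' u's'.
rewrite mulr_suml; apply: expge_sum => u us.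
rewrite -scalerAl -scalerAr scalerA; apply: expge_pcat.
- by move/allP: H1; apply; apply: map_f.
- by move/allP: H1'; apply; apply: map_f.
by apply: leq_add; [apply: (allP H2) | apply: (allP H2')].
Qed.

Lemma expge_arrow e : expge 1 (iota (ap e)).
Proof.
exists [:: (ap e, 1)]; split => //=.
by rewrite /expand big_seq1 scale1r.
Qed.

Lemma inR_expge x : inR iota x -> expge 1 x.
Proof.
move=> [s ->]; apply: expge_sum => u _.
rewrite -[1%N]/(0 + 1 + 0)%N; apply: expge_mul; last exact: expge_any.
by apply: expge_mul; [apply: expge_any | apply: expge_arrow].
Qed.

Lemma inR2_expge x : inR2 iota x -> expge 2 x.
Proof.
move=> [s [Hs ->]]; apply: expge_sum => u us.
have [H1 H2] := Hs u us.
by apply: (@expge_mul 1 1); apply: inR_expge.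
Qed.

Lemma expand_coef0 s : all valid (map fst s) -> expand s = 0 ->
  forall p, \sum_(u <- s | u.1 == p) u.2 = 0.
Proof.
move=> Hv Hs p.
pose ps := undup (map fst s).
pose s' := [seq (q, \sum_(u <- s | u.1 == q) u.2) | q <- ps].
have Hfst : map fst s' = ps by rewrite /s' -map_comp map_id.
have Hexp : expand s' = expand s.
  rewrite /expand /s' big_map /=.
  under eq_bigr => q _ do rewrite scaler_suml.
  rewrite (exchange_big_dep xpredT) //=.
  apply: eq_big_seq => u us.
  rewrite (eq_bigl (pred1 u.1)); last by move=> q; rewrite /= eq_sym.
  rewrite -big_filter filter_pred1_uniq ?undup_uniq ?big_seq1 //.
  by rewrite mem_undup map_f.
have Hall : all (fun u => u.2 == 0) s'.
  case: Hpa => H _ _; apply: H.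
  - by rewrite Hfst undup_uniq.
  - by rewrite Hfst; apply/allP => q; rewrite mem_undup => /(allP Hv).
  by move: Hexp; rewrite Hs.
have [pin|pnin] := boolP (p \in ps).
  have /(allP Hall) /= /eqP // : (p, \sum_(u <- s | u.1 == p) u.2) \in s'.
  by apply: map_f.
rewrite big1_seq // => u /andP[/eqP up us].
by move: pnin; rewrite mem_undup -up map_f.
Qed.


Lemma arrow_notR2 e : ~ inR2 iota (iota (ap e)).
Proof.
move=> /inR2_expge [s [H1 H2 He]].
pose s2 := (ap e, 1) :: [seq (u.1, - u.2) | u <- s].
have Hv : all valid (map fst s2).
  by rewrite /= -map_comp; apply: H1.
have H0 : expand s2 = 0.
  rewrite /expand big_cons big_map /= scale1r.
  under eq_bigr => u _ do rewrite scaleNr.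
  by rewrite sumrN -/(expand s) -He subrr.
have := expand_coef0 Hv H0 (ap e).
rewrite big_cons eqxx big_map /= big1_seq ?addr0; first by move/eqP; rewrite oner_eq0.
move=> u /andP[/eqP ue us]; move: (allP H2 u us); rewrite ue.
by [].
Qed.

Lemma iota_cons e e' s : valid (inr (e :: e' :: s)) ->
  iota (inr (e :: e' :: s)) = iota (ap e) * iota (inr (e' :: s)).
Proof.
move=> /= /andP[he hp]; case: Hpa => _ _ ->; last by [].
  by rewrite /= he.
by [].
Qed.
End Paths.

Section Ops.
Variables (V E : finType) (t h : E -> V) (k : fieldType) (A : algType k) (iota : qpath V E -> A).
Variables (B : algType k) (pi : A -> B).
Hypothesis Hpa : is_path_algebra t h iota.
Hypothesis Hq : is_quotient_map pi.

Local Notation valid := (valid_path t h).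
Local Notation ap e := (arrow_path V e).
Local Notation tp v := (triv_path E v).

Definition klinear (f : A -> B) := forall (a : k) x y, f (a *: x + y) = a *: f x + f y.

Lemma klin0 f : klinear f -> f 0 = 0.
Proof.
move=> H; have := H 1 0 0; rewrite !scale1r !addr0 => /eqP.
by rewrite -subr_eq0 opprD addrA subrr add0r oppr_eq0 => /eqP.
Qed.

Lemma klinD f : klinear f -> forall x y, f (x + y) = f x + f y.
Proof. by move=> H x y; have := H 1 x y; rewrite !scale1r. Qed.

Lemma klinZ f : klinear f -> forall a x, f (a *: x) = a *: f x.
Proof. by move=> H a x; rewrite -[a *: x]addr0 H klin0 // addr0. Qed.

Lemma klin_sum f (I : Type) (r : seq I) (F : I -> A) : klinear f ->
  f (\sum_(i <- r) F i) = \sum_(i <- r) f (F i).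
Proof. by move=> H; apply: big_morph; [apply: klinD | apply: klin0]. Qed.

Lemma klin_expand f s : klinear f -> f (expand iota s) = \sum_(u <- s) u.2 *: f (iota u.1).
Proof.
by move=> H; rewrite /expand klin_sum //; apply: eq_bigr => u _; rewrite klinZ.
Qed.

Lemma deriv_ext (D1 D2 : A -> B) :
  differential_operator pi D1 -> differential_operator pi D2 ->
  (forall v, D1 (iota (tp v)) = D2 (iota (tp v))) ->
  (forall e, D1 (iota (ap e)) = D2 (iota (ap e))) -> forall x, D1 x = D2 x.
Proof.
move=> [L1 M1] [L2 M2] Hv He x.
case: Hpa => _ /(_ x) [s Hs ->] _.
rewrite -/(expand iota s) !klin_expand //.
apply: eq_big_seq => u us; congr (_ *: _).
have : valid u.1 by apply: (allP Hs); apply: map_f.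
case: u.1 => [v _|[|e l]] //; first exact: Hv.
elim: l e => [|e' l IH] e Hp; first exact: He.
rewrite (iota_cons Hpa) // M1 M2 He IH //.
by case/andP: Hp.
Qed.
End Ops.

Section DOps.
Variables (V E : finType) (t h : E -> V) (k : fieldType) (A : algType k) (iota : qpath V E -> A).
Variables (B : algType k) (pi : A -> B) (D : E -> A -> B).
Hypothesis Hpa : is_path_algebra t h iota.
Hypothesis Hq : is_quotient_map pi.
Hypothesis Hker : forall x, pi x = 0 -> inR2 iota x.
Hypothesis HD : is_Dp iota pi D.

Local Notation valid := (valid_path t h).
Local Notation ap e := (arrow_path V e).
Local Notation tp v := (triv_path E v).

Lemma pi_arrow_neq0 e : pi (iota (ap e)) != 0.
Proof. by apply/eqP => /Hker; apply: (arrow_notR2 Hpa). Qed.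

Lemma D_arrow p q : D p (iota (ap q)) = (q == p)%:R *: pi (iota (ap q)).
Proof.
have [_ [H1 [H2 _]]] := HD p.
by case: eqP => [->|/eqP]; [rewrite H1 scale1r | move/H2 ->; rewrite scale0r].
Qed.

Lemma D_triv p v : D p (iota (tp v)) = 0.
Proof. by have [_ [_ [_ ->]]] := HD p. Qed.

Lemma comb_diff (c : E -> k) : differential_operator pi (fun x => \sum_e c e *: D e x).
Proof.
split=> [a x y|x y].
  rewrite scaler_sumr -big_split; apply: eq_bigr => e _.
  have [[L _] _] := HD e.
  by rewrite L scalerDr !scalerA mulrC.
rewrite mulr_suml mulr_sumr -big_split; apply: eq_bigr => e _.
have [[_ M] _] := HD e.
by rewrite M scalerDr scalerAl scalerAr.
Qed.

Lemma comb_arrow (c : E -> k) q : \sum_e c e *: D e (iota (ap q)) = c q *: pi (iota (ap q)).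
Proof.
rewrite (bigD1 q) //= D_arrow eqxx scale1r big1 ?addr0 // => e /negbTE eq.
by rewrite D_arrow eq_sym eq scale0r scaler0.
Qed.

Lemma comb_triv (c : E -> k) v : \sum_e c e *: D e (iota (tp v)) = 0.
Proof. by rewrite big1 // => e _; rewrite D_triv scaler0. Qed.

Lemma comb_eq (c c' : E -> k) :
  (forall x, \sum_e c e *: D e x = \sum_e c' e *: D e x) -> forall e, c e = c' e.
Proof.
move=> H e; have := H (iota (ap e)); rewrite !comb_arrow => /eqP.
rewrite -subr_eq0 -scalerBl scaler_eq0 (negbTE (pi_arrow_neq0 e)) orbF subr_eq0.
by move/eqP.
Qed.

Lemma Dvert_diff v : differential_operator pi (Dvert iota pi v).
Proof.
case: Hq => L M _ _; split=> [a x y|x y]; rewrite /Dvert.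
  by rewrite L mulrDr mulrDl -scalerAr -scalerAl opprD addrACA scalerBr.
by rewrite !M mulrBl mulrBr !mulrA addrA subrK.
Qed.

Lemma Dvert_comb v x :
  Dvert iota pi v x = \sum_e ((t e == v)%:R - (h e == v)%:R) *: D e x.
Proof.
have [L M _ _] := Hq.
apply: (deriv_ext Hpa (Dvert_diff v) (comb_diff _)) => [w|e].
  rewrite comb_triv /Dvert -!M; case: Hpa => _ _ HM; rewrite !HM //=.
  by case: (eqVneq v w) => [->|ne]; rewrite subrr.
rewrite comb_arrow /Dvert -!M; case: Hpa => _ _ HM; rewrite !HM //=.
rewrite scalerBl; congr (_ - _).
  by rewrite eq_sym; case: eqP => _; rewrite ?scale1r ?scale0r ?klin0.
by case: eqP => _; rewrite ?scale1r ?scale0r ?klin0.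
Qed.
End DOps.

Section Darts.
Variables (V E : finType) (t h : E -> V) (sigma : {perm dart E}).
Hypothesis Hconn : qconnected t h.
Hypothesis Hplan : planar_rotation t h sigma.

Local Notation phi := (face_perm sigma).

Lemma dflipK : involutive (@dflip E).
Proof. by case=> e b; rewrite /dflip /= negbK. Qed.

Lemma phi_inj : injective phi.
Proof. by move=> d d' /perm_inj /(can_inj dflipK). Qed.

Lemma sigma_phi d : sigma d = phi (dflip d).
Proof. by rewrite /face_perm dflipK. Qed.

Lemma froot_phi d : froot phi (phi d) = froot phi d.
Proof.
have Hsym : connect_sym (frel phi) := fconnect_sym phi_inj.
apply/esym/eqP; rewrite (root_connect Hsym).
exact: fconnect1.
Qed.

Lemma fconnect_root r d : froots phi r -> fconnect phi r d = (froot phi d == r).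
Proof.
move=> /eqP Hr; rewrite -(root_connect (fconnect_sym phi_inj)) Hr.
by rewrite eq_sym.
Qed.

Lemma dart_all (Q : dart E -> Prop) :
  (forall d, Q d -> Q (dflip d)) -> (forall d, Q d -> Q (sigma d)) ->
  forall d d', Q d -> Q d'.
Proof.
move=> Hf Hs.
have Hfc : forall d d', fconnect sigma d d' -> Q d -> Q d'.
  move=> d d' /iter_findex <-; elim: (findex _ _ _) => //= n IH Qd.
  by apply: Hs; apply: IH.
have Hv : forall d d', dvert t h d = dvert t h d' -> Q d -> Q d'.
  by move=> d d' /(proj1 (proj2 (match Hplan with And3 a b c => conj a (conj b c) end))); apply: Hfc.
move=> d d' Qd.
have [_ /(_ (dvert t h d) (dvert t h d'))] := Hconn.
move=> /connectP [p pp lp].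
have key : forall p u d0, path (qadj t h) u p -> dvert t h d' = last u p ->
    dvert t h d0 = u -> Q d0 -> Q d'.
  elim=> [|w p' IH] u d0 /=.
    by move=> _ lp0 H0 Qd0; apply: (Hv d0) => //; rewrite H0 lp0.
  move=> /andP [/existsP [e He] pp'] lp' H0 Qd0.
  case/orP: He => /andP [/eqP tu /eqP hw].
    have Q1 : Q (e, true) by apply: (Hv d0) => //; rewrite H0 /dvert /= tu.
    have Q2 : Q (e, false) by apply: (Hf (e, true)).
    by apply: (IH w (e, false)) => //; rewrite /dvert /= hw.
  have Q1 : Q (e, false) by apply: (Hv d0) => //; rewrite H0 /dvert /= hw.
  have Q2 : Q (e, true) by apply: (Hf (e, false)).
  by apply: (IH w (e, true)) => //; rewrite /dvert /= tu.
exact: (key p (dvert t h d) d).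
Qed.
End Darts.

Section Faces.
Variables (V E : finType) (t h : E -> V) (sigma : {perm dart E}).
Variables (k : fieldType) (A : algType k) (B : algType k) (D : E -> A -> B).

Local Notation phi := (face_perm sigma).

Lemma Dface_comb r x : Dface D sigma r x =
  \sum_e ((fconnect phi r (e, true))%:R - (fconnect phi r (e, false))%:R) *: D e x.
Proof.
rewrite /Dface big_uniq ?orbit_uniq //.
rewrite (eq_bigl (fun d => fconnect phi r d)); last by move=> d; rewrite fconnect_orbit.
rewrite big_mkcond /=.
have -> : \sum_(d : dart E) (if fconnect phi r d then dsign k d *: D d.1 x else 0) =
    \sum_e \sum_b (if fconnect phi r (e, b) then dsign k (e, b) *: D e x else 0).
  by rewrite pair_big; apply: eq_bigr => [[e b]] _.
apply: eq_bigr => e _; rewrite big_bool /= /dsign /=.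
case: (fconnect phi r (e, true)); case: (fconnect phi r (e, false)) => /=.
- by rewrite subrr scale0r scaleN1r scale1r subrr.
- by rewrite subr0 scale1r addr0.
- by rewrite sub0r add0r scaleN1r; rewrite ?scaleNr ?scale1r.
by rewrite subrr scale0r addr0.
Qed.

Lemma root_pick (b : dart E -> k) d :
  \sum_(r <- face_roots sigma) b r * (fconnect phi r d)%:R = b (froot phi d).
Proof.
have inj := @phi_inj E sigma.
rewrite /face_roots big_enum /= (bigD1 (froot phi d)) /=; last first.
  by apply: roots_root; apply: fconnect_sym.
rewrite fconnect_root ?eqxx ?mulr1; last by apply: roots_root; apply: fconnect_sym.
rewrite big1 ?addr0 // => r /andP [rr ne].
by rewrite fconnect_root // eq_sym (negbTE ne) mulr0.
Qed.

Lemma Dface_sum (b : dart E -> k) x :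
  \sum_(r <- face_roots sigma) b r *: Dface D sigma r x =
  \sum_e (b (froot phi (e, true)) - b (froot phi (e, false))) *: D e x.
Proof.
under eq_bigr => r _ do rewrite Dface_comb scaler_sumr.
rewrite exchange_big /=; apply: eq_bigr => e _.
rewrite -!root_pick -sumrB scaler_suml; apply: eq_bigr => r _.
by rewrite scalerA mulrBr.
Qed.
End Faces.

Section SpanGen.
Variables (k : fieldType) (X : Type) (M : lmodType k).

Lemma pos_nth (T : Type) (s : seq T) p0 (G : T -> X -> M) (c : nat -> k) x :
  \sum_(i < size (map G s)) c i *: fam_nth (map G s) i x =
  \sum_(i < size s) c i *: G (nth p0 s i) x.
Proof.
rewrite size_map; apply: eq_bigr => i _.
by rewrite /fam_nth (nth_map p0).
Qed.

Lemma pos_index (T : eqType) (s : seq T) p0 (F : nat -> T -> M) : uniq s ->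
  \sum_(i < size s) F i (nth p0 s i) = \sum_(p <- s) F (index p s) p.
Proof.
move=> us; rewrite (big_nth p0) big_mkord; apply: eq_bigr => i _.
by rewrite index_uniq.
Qed.

Lemma in_span_map (T : Type) (s : seq T) (G : T -> X -> M) (g : X -> M) (c' : T -> k) :
  (forall x, g x = \sum_(p <- s) c' p *: G p x) -> in_span (map G s) g.
Proof.
case: s => [|p0 s] H.
  by exists (fun _ => 0) => x; rewrite H big_nil big_ord0.
exists (fun i => c' (nth p0 (p0 :: s) i)) => x.
rewrite (pos_nth (p0 :: s) p0 G (fun i => c' (nth p0 (p0 :: s) i))).
by rewrite H (big_nth p0) big_mkord.
Qed.

Lemma mask_size_le (T : Type) (m : bitseq) (s : seq T) : (size (mask m s) <= size s)%N.
Proof.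
elim: s m => [|x s IH] [|b m] //=; case: b => //=; first exact: IH.
exact: leq_trans (IH m) (leqnSn _).
Qed.

Lemma mask_full (T : Type) (m : bitseq) (s : seq T) : size (mask m s) = size s -> mask m s = s.
Proof.
elim: s m => [|x s IH] [|b m] //=; case: b => /=; first by move=> [/IH ->].
by move=> Hs; have := mask_size_le m s; rewrite Hs ltnn.
Qed.

Lemma span_dim_const (fs : seq (X -> M)) : (0 < size fs)%N ->
  (forall c : nat -> k, (forall x, \sum_(i < size fs) c i *: fam_nth fs i x = 0) <->
     (forall i j, (i < size fs)%N -> (j < size fs)%N -> c i = c j)) ->
  span_dim fs (size fs - 1).
Proof.
case: fs => [//|f0 fs] _ H; split.
  exists (false :: nseq (size fs) true); rewrite /= mask_true // subn1 /=; split => //.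
  move=> c Hc i ilt.
  pose c' := fun i => if i is i'.+1 then c i' else 0.
  have Hc' : forall x, \sum_(i < size (f0 :: fs)) c' i *: fam_nth (f0 :: fs) i x = 0.
    move=> x; rewrite big_ord_recl /= scale0r add0r.
    rewrite -[X in _ = X](Hc x); apply: eq_bigr => i0 _. by rewrite add0n.
  by have := (proj1 (H c') Hc' i.+1 0 ilt isT).
move=> m Hm.
have le := mask_size_le m (f0 :: fs).
rewrite subn1 /= -ltnS ltn_neqAle le andbT.
apply/negP => /eqP Hsz.
have Hs : mask m (f0 :: fs) = f0 :: fs by apply: mask_full.
have := Hm (fun _ => 1); rewrite Hs => Hi.
have : (1 : k) = 0.
  apply: (Hi _ 0) => //.
  by apply: (proj2 (H (fun _ => 1))).
by move/eqP; rewrite oner_eq0.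
Qed.
End SpanGen.

Section Helpers.
Variables (k : fieldType) (X : Type) (M : lmodType k).

Lemma pos_map (T : eqType) (s : seq T) (G : T -> X -> M) (c : nat -> k) x : uniq s ->
  \sum_(i < size (map G s)) c i *: fam_nth (map G s) i x = \sum_(p <- s) c (index p s) *: G p x.
Proof.
case: s => [|p0 s] us; first by rewrite big_nil big_ord0.
rewrite (pos_nth (p0 :: s) p0 G c).
by rewrite (pos_index p0 (fun i p => c i *: G p x)).
Qed.

Lemma big_enumT (T : finType) (F : T -> M) : \sum_(p <- enum T) F p = \sum_p F p.
Proof. by rewrite big_enum; apply: eq_bigl => p; rewrite inE. Qed.

Lemma sum_pick (T : finType) (a : T -> k) w : \sum_v a v * (w == v)%:R = a w.
Proof.
rewrite (bigD1 w) //= eqxx mulr1 big1 ?addr0 // => v /negbTE.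
by rewrite eq_sym => ->; rewrite mulr0.
Qed.
End Helpers.

Section Main.
Variables (V E : finType) (t h : E -> V) (sigma : {perm dart E})
  (k : fieldType) (A : algType k) (iota : qpath V E -> A)
  (B : algType k) (pi : A -> B) (D : E -> A -> B).
Hypothesis Hconn : qconnected t h.
Hypothesis Hplan : planar_rotation t h sigma.
Hypothesis Hch : [pchar k] =i pred0.
Hypothesis Hpa : is_path_algebra t h iota.
Hypothesis Hq : is_quotient_map pi.
Hypothesis Hker : forall x, pi x = 0 -> inR2 iota x.
Hypothesis HD : is_Dp iota pi D.

Local Notation phi := (face_perm sigma).
Local Notation DV := (DV_family iota pi).
Local Notation DE := (DE_family D).
Local Notation DP := (DP_family D sigma).
Local Notation rs := (face_roots sigma).

Lemma DV_pos (c : nat -> k) x :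
  \sum_(i < size DV) c i *: fam_nth DV i x =
  \sum_e (c (index (t e) (enum V)) - c (index (h e) (enum V))) *: D e x.
Proof.
rewrite /DV_family pos_map ?enum_uniq // big_enumT.
under eq_bigr => v _ do rewrite (Dvert_comb Hpa Hq HD) scaler_sumr.
rewrite exchange_big /=; apply: eq_bigr => e _.
under eq_bigr => v _ do rewrite scalerA.
rewrite -scaler_suml; congr (_ *: _).
under eq_bigr => v _ do rewrite mulrBr.
by rewrite sumrB !sum_pick.
Qed.

Lemma vert_const (a : V -> k) : (forall e, a (t e) = a (h e)) -> forall u v, a u = a v.
Proof.
move=> Ha u v; have [_ /(_ u v) /connectP [p pp ->]] := Hconn.
elim: p u pp => [|w p IH] u //= /andP [/existsP [e He] pp].
rewrite -(IH w pp).
by case/orP: He => /andP [/eqP <- /eqP <-].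
Qed.

Lemma DV_rel (c : nat -> k) :
  (forall x, \sum_(i < size DV) c i *: fam_nth DV i x = 0) <->
  (forall i j, (i < size DV)%N -> (j < size DV)%N -> c i = c j).
Proof.
have [v0 _] : exists v0 : V, true.
  by case: Hconn => /card_gt0P [v _] _; exists v.
have Hsz : size DV = size (enum V) by rewrite size_map.
split => H.
  have Hc : forall e, c (index (t e) (enum V)) - c (index (h e) (enum V)) = 0.
    apply: (comb_eq Hpa Hker HD) => x; rewrite -DV_pos H.
    by rewrite big1 // => e _; rewrite scale0r.
  have Ha := @vert_const (fun v : V => c (index v (enum V))) (fun e => subr0_eq (Hc e)).
  move=> i j; rewrite Hsz => ilt jlt.
  have := Ha (nth v0 (enum V) i) (nth v0 (enum V) j).
  by rewrite !index_uniq ?enum_uniq.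
move=> x; rewrite DV_pos big1 // => e _.
rewrite (H (index (t e) (enum V)) (index (h e) (enum V))) ?subrr ?scale0r //.
  by rewrite Hsz index_mem mem_enum.
by rewrite Hsz index_mem mem_enum.
Qed.

Lemma partA : span_dim DV (#|V| - 1).
Proof.
have -> : #|V| = size DV by rewrite size_map cardE.
apply: span_dim_const; last exact: DV_rel.
by rewrite size_map -cardE; case: Hconn.
Qed.

Definition beta (c : nat -> k) (d : dart E) := c (index (froot phi d) rs).

Lemma root_in d : froot phi d \in rs.
Proof.
by rewrite /face_roots mem_enum; apply: roots_root; apply: fconnect_sym; apply: phi_inj.
Qed.

Lemma rs_pos : #|E| != 0%N -> (0 < size rs)%N.
Proof.
rewrite -lt0n => /card_gt0P [e _].
by move: (root_in (e, true)); case: (face_roots sigma).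
Qed.

Lemma DP_pos (c : nat -> k) x : #|E| != 0%N ->
  \sum_(i < size DP) c i *: fam_nth DP i x =
  \sum_e (beta c (e, true) - beta c (e, false)) *: D e x.
Proof.
move=> HE; rewrite /DP_family (negbTE HE) pos_map; last by rewrite /face_roots enum_uniq.
exact: (Dface_sum sigma D (fun r => c (index r rs))).
Qed.

Lemma beta_const (c : nat -> k) : (forall e, beta c (e, true) = beta c (e, false)) ->
  forall d d', beta c d = beta c d'.
Proof.
move=> Hb d d'.
apply: (dart_all Hconn Hplan (Q := fun d' => beta c d = beta c d')) => // [x|x] Hx.
  by rewrite Hx; case: x {Hx} => e [] /=; rewrite /dflip /= Hb.
rewrite Hx sigma_phi /beta froot_phi.
  by case: x {Hx} => e [] /=; [apply: (Hb e) | apply: esym (Hb e)].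
Qed.

Lemma beta_root (c : nat -> k) i r0 : (i < size rs)%N -> beta c (nth r0 rs i) = c i.
Proof.
move=> ilt; rewrite /beta.
have : nth r0 rs i \in rs by apply: mem_nth.
rewrite {1}/face_roots mem_enum => /eqP ->.
by rewrite index_uniq // /face_roots enum_uniq.
Qed.

Lemma beta_lt (c : nat -> k) d : (index (froot phi d) rs < size rs)%N.
Proof. by rewrite index_mem root_in. Qed.

Lemma DP_rel (c : nat -> k) : #|E| != 0%N ->
  (forall x, \sum_(i < size DP) c i *: fam_nth DP i x = 0) <->
  (forall i j, (i < size DP)%N -> (j < size DP)%N -> c i = c j).
Proof.
move=> HE; have Hsz : size DP = size rs by rewrite /DP_family (negbTE HE) size_map.
split => H.
  have Hc : forall e, beta c (e, true) - beta c (e, false) = 0.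
    apply: (comb_eq Hpa Hker HD) => x; rewrite -DP_pos // H.
    by rewrite big1 // => e _; rewrite scale0r.
  have Hb := beta_const (fun e => subr0_eq (Hc e)).
  move=> i j; rewrite Hsz => ilt jlt.
  have [e _] : exists e : E, true by move: HE; rewrite -lt0n => /card_gt0P [e _]; exists e.
  by rewrite -(beta_root c (e, true) ilt) -(beta_root c (e, true) jlt).
move=> x; rewrite DP_pos // big1 // => e _.
by rewrite /beta (H _ (index (froot phi (e, false)) rs)) ?subrr ?scale0r // Hsz beta_lt.
Qed.

Lemma partB : span_dim DP (nfaces sigma - 1).
Proof.
rewrite /nfaces; case: (boolP (#|E| == 0%N)) => HE.
  rewrite /DP_family HE; apply: span_dim_const => // c; split => H.
    by move=> [|i] [|j].
  by move=> x; rewrite big_ord1 /fam_nth /= scaler0.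
have -> : size rs = size DP by rewrite /DP_family (negbTE HE) size_map.
apply: span_dim_const; last by move=> c; apply: DP_rel.
by rewrite /DP_family (negbTE HE) size_map rs_pos.
Qed.

Lemma partC : span_sub DV DE /\ span_sub DP DE.
Proof.
split=> i ilt.
  have [v0 _] : exists v0 : V, true.
    by case: Hconn => /card_gt0P [v _] _; exists v.
  apply: (in_span_map (c' := fun e => (t e == nth v0 (enum V) i)%:R - (h e == nth v0 (enum V) i)%:R)) => x.
  rewrite big_enumT /fam_nth (nth_map v0); last by rewrite size_map in ilt.
  exact: (Dvert_comb Hpa Hq HD).
case: (boolP (#|E| == 0%N)) => HE.
  apply: (in_span_map (c' := fun _ => 0)) => x.
  move: ilt; rewrite /DP_family HE /= ltnS leqn0 => /eqP ->.
  by rewrite /fam_nth /= big1 // => e _; rewrite scale0r.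
have [e0 _] : exists e : E, true by move: HE; rewrite -lt0n => /card_gt0P [e _]; exists e.
apply: (in_span_map (c' := fun e => (fconnect phi (nth (e0, true) rs i) (e, true))%:R -
                                    (fconnect phi (nth (e0, true) rs i) (e, false))%:R)) => x.
rewrite big_enumT /fam_nth /DP_family (negbTE HE) (nth_map (e0, true)); last first.
  by move: ilt; rewrite /DP_family (negbTE HE) size_map.
exact: Dface_comb.
Qed.

Lemma fi_lt d : (index (froot phi d) rs < size rs)%N.
Proof. by rewrite index_mem root_in. Qed.

Definition fo d : 'I_(size rs) := Ordinal (fi_lt d).

Lemma fo_phi d : fo (phi d) = fo d.
Proof. by apply: val_inj; rewrite /= froot_phi. Qed.

Lemma fo_nth r0 (i : 'I_(size rs)) : fo (nth r0 rs i) = i.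
Proof.
apply: val_inj => /=.
have : nth r0 rs i \in rs by apply: mem_nth.
rewrite {1}/face_roots mem_enum => /eqP ->.
by rewrite index_uniq // /face_roots enum_uniq.
Qed.

Definition wf (i j : 'I_(size rs)) : nat := \sum_d ((fo d == i) && (fo (dflip d) == j) : nat).

Lemma wf_sym i j : wf i j = wf j i.
Proof.
rewrite /wf (reindex_inj (can_inj (@dflipK E))) /=.
by apply: eq_bigr => d _; rewrite dflipK andbC.
Qed.

Lemma dvert_sigma d : dvert t h (sigma d) = dvert t h d.
Proof. by case: Hplan => H _ _; apply: H. Qed.

Lemma partD : span_meet_trivial DV DP.
Proof.
move=> g [c1 H1] [c2 H2] x.
case: (boolP (#|E| == 0%N)) => HE.
  by rewrite H2 /DP_family HE big_ord1 /fam_nth /= scaler0.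
pose a v := c1 (index v (enum V)).
have Heq : forall e, a (t e) - a (h e) = beta c2 (e, true) - beta c2 (e, false).
  apply: (comb_eq Hpa Hker HD) => y.
  by rewrite -DV_pos -H1 H2 DP_pos.
have [e0 _] : exists e : E, true by move: HE; rewrite -lt0n => /card_gt0P [e _]; exists e.
pose b (i : 'I_(size rs)) := c2 i.
have Hbeta : forall d, beta c2 d = b (fo d) by [].
have Hharm : forall j, harm wf b j = 0.
  move=> j; rewrite /harm.
  under eq_bigr => i _ do rewrite /wf natr_sum mulr_suml.
  rewrite exchange_big /=.
  have step1 : forall d, \sum_i ((fo d == i) && (fo (dflip d) == j) : nat)%:R * (b j - b i) =
      (fo (dflip d) == j)%:R * (b j - b (fo d)).
    move=> d; case: (fo (dflip d) == j); last first.
      by rewrite mul0r big1 // => i _; rewrite andbF mul0r.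
    rewrite mul1r (bigD1 (fo d)) //= eqxx mul1r big1 ?addr0 // => i /negbTE ne.
    by rewrite eq_sym ne mul0r.
  under eq_bigr => d _ do rewrite step1.
  rewrite (reindex_inj (can_inj (@dflipK E))) /=.
  have step2 : forall d, (fo (dflip (dflip d)) == j)%:R * (b j - b (fo (dflip d))) =
      (fo d == j)%:R * (a (dvert t h d) - a (dvert t h (phi d))).
    move=> d; rewrite dflipK; case: eqP => [<-|_]; last by rewrite !mul0r.
    rewrite !mul1r -!Hbeta /face_perm dvert_sigma.
    case: d => e [] /=; rewrite /dflip /dvert /=; first exact: esym (Heq e).
    by rewrite -(opprB (beta c2 (e, true))) -(Heq e) opprB.
  under eq_bigr => d _ do rewrite step2.
  under eq_bigr => d _ do rewrite mulrBr.
  rewrite sumrB [X in X - _](reindex_inj (@phi_inj E sigma)) /=.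
  under [X in X - _]eq_bigr => d _ do rewrite fo_phi.
  by rewrite subrr.
have Hconn' : forall P : pred 'I_(size rs), (exists i, P i) ->
    (forall i j, (0 < wf i j)%N -> P i -> P j) -> forall i, P i.
  move=> P [i0 Pi0] HP i.
  have Hf : forall d, P (fo d) -> P (fo (dflip d)).
    move=> d; apply: HP; rewrite /wf (bigD1 d) //= !eqxx. by [].
  have Qall : forall d d', P (fo d) -> P (fo d').
    apply: (dart_all Hconn Hplan) => y Hy; first exact: Hf.
    by rewrite sigma_phi fo_phi; apply: Hf.
  rewrite -(fo_nth (e0, true) i); apply: (Qall (nth (e0, true) rs i0)).
  by rewrite fo_nth.
have Hc := harmonic_const Hch wf_sym Hconn' Hharm.
rewrite H2 DP_pos // big1 // => e _.
by rewrite !Hbeta (Hc (fo (e, true)) (fo (e, false))) subrr scale0r.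
Qed.
End Main.

Theorem lemma3p6
  (V E : finType) (t h : E -> V) (sigma : {perm dart E})
  (k : fieldType) (A : algType k) (iota : qpath V E -> A)
  (B : algType k) (pi : A -> B) (D : E -> A -> B) :
  qconnected t h ->
  planar_rotation t h sigma ->
  [pchar k] =i pred0 ->
  is_path_algebra t h iota ->
  is_quotient_map pi ->
  (forall x, pi x = 0 -> inR2 iota x) ->
  is_Dp iota pi D ->
  [/\ span_dim (DV_family iota pi) (#|V| - 1),
      span_dim (DP_family D sigma) (nfaces sigma - 1),
      span_sub (DV_family iota pi) (DE_family D) /\ span_sub (DP_family D sigma) (DE_family D)
    & span_meet_trivial (DV_family iota pi) (DP_family D sigma)].
Proof.
move=> Hconn Hplan Hch Hpa Hq Hker HD; split.
- by apply: (partA Hconn).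
- exact: (partB Hconn Hplan Hpa Hker HD).
- exact: (partC sigma Hconn Hpa Hq HD).
exact: (partD Hconn Hplan Hch Hpa Hq Hker HD).
Qed.
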